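(* Let $(L,\delta,\alpha,\beta)$ be a BiHom-Lie algebra, $(V,\alpha_V,\beta_V)$ an abelian BiHom-Lie algebra, $(\lambda_l,\lambda_r)$ a representation of $L$ on $V$, and let $\theta,\theta'$ be $2$-cocycles of $L$ on $V$ with respect to $(\lambda_l,\lambda_r)$ which are equivalent, i.e. $\theta'-\theta=D_1(h)$ for some $h\in C^1(L,V)$. Define $d,d'$ on $L\oplus V$ by $d(x+v,y+w)=\delta(x,y)+\theta(x,y)+\lambda_l(x,w)+\lambda_r(v,y)$ and $d'(x+v,y+w)=\delta(x,y)+\theta'(x,y)+\lambda_l(x,w)+\lambda_r(v,y)$. Then the extensions $$0\to(V,\alpha_V,\beta_V)\xrightarrow{i_0}(L\oplus V,d,\alpha+\alpha_V,\beta+\beta_V)\xrightarrow{\pi_0}(L,\delta,\alpha,\beta)\to0$$ and $$0\to(V,\alpha_V,\beta_V)\xrightarrow{i_0}(L\oplus V,d',\alpha+\alpha_V,\beta+\beta_V)\xrightarrow{\pi_0}(L,\delta,\alpha,\beta)\to0,$$ where $i_0(v)=v$, $\pi_0(x+v)=x$, are equivalent.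
   Context: All vector spaces are over a field $\mathbb{K}$. A BiHom-Lie algebra $(L,\delta,\alpha,\beta)$ is a vector space with bilinear $\delta$ and linear $\alpha,\beta$ such that $\alpha\beta=\beta\alpha$, $\delta(\beta(x),\alpha(y))=-\delta(\beta(y),\alpha(x))$ and $\delta(\beta^2(x),\delta(\beta(y),\alpha(z)))+\delta(\beta^2(y),\delta(\beta(z),\alpha(x)))+\delta(\beta^2(z),\delta(\beta(x),\alpha(y)))=0$. A morphism of BiHom-Lie algebras is a linear map commuting with the two structure maps and the brackets. An abelian BiHom-Lie algebra $(V,\alpha_V,\beta_V)$ has zero bracket and commuting linear maps $\alpha_V,\beta_V$. On $L\oplus V$, $\alpha+\alpha_V$ is $x+v\mapsto\alpha(x)+\alpha_V(v)$, similarly $\beta+\beta_V$. Two extensions $0\to V_1\xrightarrow{i_1}M_1\xrightarrow{\pi_1}L_1\to0$, $0\to V_2\xrightarrow{i_2}M_2\xrightarrow{\pi_2}L_2\to0$ (short exact sequences of BiHom-Lie algebra morphisms) are equivalent if there exist linear maps $\varphi\colon V_1\to V_2$, $s\colon L_1\to L_2$ and an isomorphism of BiHom-Lie algebras $\Phi\colon M_1\to M_2$ with $\Phi\circ i_1=i_2\circ\varphi$ and $\pi_2\circ\Phi=s\circ\pi_1$. A representation of $L$ on $V$ is a pair of bilinear maps $\lambda_l\colon L\times V\to V$, $\lambda_r\colon V\times L\to V$ with, for all $x,y\in L$, $v\in V$: $\lambda_r(\beta_V(v),\alpha(y))=-\lambda_l(\beta(y),\alpha_V(v))$ and $\lambda_l(\beta^2(x),\lambda_l(\beta(y),\alpha_V(v)))+\lambda_l(\beta^2(y),\lambda_r(\beta_V(v),\alpha(x)))+\lambda_r(\beta_V^2(v),\delta(\beta(x),\alpha(y)))=0$.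 A $2$-cocycle is a bilinear $\theta\colon L\times L\to V$ with $\theta(\beta(x),\alpha(y))=-\theta(\beta(y),\alpha(x))$ and $\theta(\beta^2(x),\delta(\beta(y),\alpha(z)))-\theta(\beta^2(y),\delta(\beta(x),\alpha(z)))+\theta(\beta^2(z),\delta(\beta(x),\alpha(y)))+\lambda_l(\beta^2(x),\theta(\beta(y),\alpha(z)))-\lambda_l(\beta^2(y),\theta(\beta(x),\alpha(z)))+\lambda_l(\beta^2(z),\theta(\beta(x),\alpha(y)))=0$ for all $x,y,z$. $C^1(L,V)$ is the set of linear $h\colon L\to V$ with $h\alpha=\alpha_V h$, $h\beta=\beta_V h$, and $D_1(h)(x,y)=-h(\delta(x,y))+\lambda_l(x,h(y))+\lambda_r(h(x),y)$. *)

(* Defs.v *)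
From HB Require Import structures.
From mathcomp Require Import all_boot all_order all_algebra.
Set Implicit Arguments. Unset Strict Implicit. Unset Printing Implicit Defensive.
Import GRing.Theory.
Local Open Scope ring_scope.

Section BiHom.
Variable K : fieldType.

Definition is_linear (U W : lmodType K) (f : U -> W) : Prop :=
  forall (a : K) (x y : U), f (a *: x + y) = a *: f x + f y.

Definition is_bilinear (U1 U2 W : lmodType K) (b : U1 -> U2 -> W) : Prop :=
  (forall y, is_linear (fun x => b x y)) /\ (forall x, is_linear (b x)).

Definition bihom_lie (L : lmodType K) (delta : L -> L -> L) (alpha beta : L -> L)
  : Prop :=
  [/\ is_bilinear delta, is_linear alpha, is_linear beta,
      (forall x, alpha (beta x) = beta (alpha x)) &
      (forall x y, delta (beta x) (alpha y) = - delta (beta y) (alpha x)) /\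
      (forall x y z,
         delta (beta (beta x)) (delta (beta y) (alpha z))
       + delta (beta (beta y)) (delta (beta z) (alpha x))
       + delta (beta (beta z)) (delta (beta x) (alpha y)) = 0)].

Definition abelian_bihom_lie (V : lmodType K) (alphaV betaV : V -> V) : Prop :=
  bihom_lie (fun _ _ => 0) alphaV betaV.

Definition bihom_morphism (M1 M2 : lmodType K) (f : M1 -> M2)
  (d1 : M1 -> M1 -> M1) (a1 b1 : M1 -> M1)
  (d2 : M2 -> M2 -> M2) (a2 b2 : M2 -> M2) : Prop :=
  [/\ is_linear f,
      (forall x, f (a1 x) = a2 (f x)),
      (forall x, f (b1 x) = b2 (f x)) &
      (forall x y, f (d1 x y) = d2 (f x) (f y))].

Definition bihom_isomorphism (M1 M2 : lmodType K) (f : M1 -> M2)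
  (d1 : M1 -> M1 -> M1) (a1 b1 : M1 -> M1)
  (d2 : M2 -> M2 -> M2) (a2 b2 : M2 -> M2) : Prop :=
  [/\ bihom_lie d1 a1 b1, bihom_lie d2 a2 b2,
      bihom_morphism f d1 a1 b1 d2 a2 b2 & bijective f].

Definition bihom_extension (V M L : lmodType K)
  (dV : V -> V -> V) (aV bV : V -> V)
  (dM : M -> M -> M) (aM bM : M -> M)
  (dL : L -> L -> L) (aL bL : L -> L)
  (i : V -> M) (p : M -> L) : Prop :=
  [/\ bihom_lie dV aV bV, bihom_lie dM aM bM, bihom_lie dL aL bL,
      bihom_morphism i dV aV bV dM aM bM &
      bihom_morphism p dM aM bM dL aL bL] /\
  [/\ injective i, (forall l, exists m, p m = l) &
      (forall m, p m = 0 <-> exists v, i v = m)].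

Definition equivalent_extensions (V1 M1 L1 V2 M2 L2 : lmodType K)
  (dM1 : M1 -> M1 -> M1) (aM1 bM1 : M1 -> M1) (i1 : V1 -> M1) (p1 : M1 -> L1)
  (dM2 : M2 -> M2 -> M2) (aM2 bM2 : M2 -> M2) (i2 : V2 -> M2) (p2 : M2 -> L2)
  : Prop :=
  exists (phi : V1 -> V2) (s : L1 -> L2) (Phi : M1 -> M2),
    [/\ is_linear phi, is_linear s,
        bihom_isomorphism Phi dM1 aM1 bM1 dM2 aM2 bM2,
        (forall v, Phi (i1 v) = i2 (phi v)) &
        (forall m, p2 (Phi m) = s (p1 m))].

Definition bihom_rep (L V : lmodType K) (delta : L -> L -> L) (alpha beta : L -> L)
  (alphaV betaV : V -> V) (ll : L -> V -> V) (lr : V -> L -> V) : Prop :=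
  [/\ is_bilinear ll, is_bilinear lr,
      (forall y v, lr (betaV v) (alpha y) = - ll (beta y) (alphaV v)) &
      (forall x y v,
         ll (beta (beta x)) (ll (beta y) (alphaV v))
       + ll (beta (beta y)) (lr (betaV v) (alpha x))
       + lr (betaV (betaV v)) (delta (beta x) (alpha y)) = 0)].

Definition two_cocycle (L V : lmodType K) (delta : L -> L -> L) (alpha beta : L -> L)
  (ll : L -> V -> V) (theta : L -> L -> V) : Prop :=
  [/\ is_bilinear theta,
      (forall x y, theta (beta x) (alpha y) = - theta (beta y) (alpha x)) &
      (forall x y z,
         theta (beta (beta x)) (delta (beta y) (alpha z))
       - theta (beta (beta y)) (delta (beta x) (alpha z))
       + theta (beta (beta z)) (delta (beta x) (alpha y))
       + ll (beta (beta x)) (theta (beta y) (alpha z))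
       - ll (beta (beta y)) (theta (beta x) (alpha z))
       + ll (beta (beta z)) (theta (beta x) (alpha y)) = 0)].

Definition C1 (L V : lmodType K) (alpha beta : L -> L) (alphaV betaV : V -> V)
  (h : L -> V) : Prop :=
  [/\ is_linear h, (forall x, h (alpha x) = alphaV (h x)) &
      (forall x, h (beta x) = betaV (h x))].

Definition D1 (L V : lmodType K) (delta : L -> L -> L)
  (ll : L -> V -> V) (lr : V -> L -> V) (h : L -> V) (x y : L) : V :=
  - h (delta x y) + ll x (h y) + lr (h x) y.

Definition ext_bracket (L V : lmodType K) (delta : L -> L -> L) (theta : L -> L -> V)
  (ll : L -> V -> V) (lr : V -> L -> V) (p q : (L * V)%type) : (L * V)%type :=
  (delta p.1 q.1, theta p.1 q.1 + ll p.1 q.2 + lr p.2 q.1).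

Definition sum_map (L V : lmodType K) (f : L -> L) (g : V -> V) (p : (L * V)%type)
  : (L * V)%type := (f p.1, g p.2).

Definition i0 (L V : lmodType K) (v : V) : (L * V)%type := (0, v).
Definition pi0 (L V : lmodType K) (p : (L * V)%type) : L := p.1.

End BiHom.

(* Main.v *)
Require Import Defs.
From mathcomp Require Import all_boot all_order all_algebra.
Import GRing.Theory.
Local Open Scope ring_scope.

Section Helpers.
Variable K : fieldType.

Lemma lin0 {U W : lmodType K} {f : U -> W} : is_linear f -> f 0 = 0.
Proof.
move=> H; have e := H 1 0 0; rewrite !scale1r addr0 in e.
by apply: (@addrI _ (f 0)); rewrite addr0 -e.
Qed.

Lemma linD {U W : lmodType K} {f : U -> W} x y : is_linear f -> f (x + y) = f x + f y.
Proof. by move=> H; have := H 1 x y; rewrite !scale1r. Qed.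

Lemma linN {U W : lmodType K} {f : U -> W} x : is_linear f -> f (- x) = - f x.
Proof.
move=> H; have := H (-1) x 0; rewrite !scaleN1r !addr0 => ->.
by rewrite (lin0 H) addr0.
Qed.

Lemma linZ {U W : lmodType K} {f : U -> W} a x : is_linear f -> f (a *: x) = a *: f x.
Proof. by move=> H; have := H a x 0; rewrite !addr0 (lin0 H) addr0. Qed.

Lemma linB {U W : lmodType K} {f : U -> W} x y : is_linear f -> f (x - y) = f x - f y.
Proof. by move=> H; rewrite (linD _ _ H) (linN _ H). Qed.

Lemma jac_comb (M : zmodType) (a1 a2 a3 a4 a5 b1 b2 b3 b4 b5 c1 c2 c3 c4 c5 : M) :
  a1 + b1 + c1 + a2 + b2 + c2 = 0 ->
  a3 + b4 + c5 = 0 -> b3 + c4 + a5 = 0 -> c3 + a4 + b5 = 0 ->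
  (a1 + (a2 + a3 + a4) + a5) + (b1 + (b2 + b3 + b4) + b5)
    + (c1 + (c2 + c3 + c4) + c5) = 0.
Proof.
move=> H1 H2 H3 H4.
have -> : (a1 + (a2 + a3 + a4) + a5) + (b1 + (b2 + b3 + b4) + b5)
    + (c1 + (c2 + c3 + c4) + c5) =
  (a1 + b1 + c1 + a2 + b2 + c2) + (a3 + b4 + c5) + (b3 + c4 + a5) + (c3 + a4 + b5).
  rewrite !addrA.
  by rewrite [LHS](ACl (1*6*11*2*7*12*3*9*15*8*14*5*13*4*10)%AC).
by rewrite H1 H2 H3 H4 !addr0.
Qed.

End Helpers.

Lemma ext_lie (K : fieldType) (L V : lmodType K)
  (delta : L -> L -> L) (alpha beta : L -> L)
  (alphaV betaV : V -> V)
  (ll : L -> V -> V) (lr : V -> L -> V)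
  (theta : L -> L -> V) :
  bihom_lie delta alpha beta ->
  abelian_bihom_lie alphaV betaV ->
  bihom_rep delta alpha beta alphaV betaV ll lr ->
  two_cocycle delta alpha beta ll theta ->
  bihom_lie (ext_bracket delta theta ll lr) (sum_map alpha alphaV) (sum_map beta betaV).
Proof.
move=> [[d1 d2] la lb cab [dsk djac]] [_ lav lbv cabv _] [[l1 l2] [r1 r2] rsk rjac]
  [[t1 t2] tsk tcoc].
split.
- split.
  + move=> [y w]; rewrite /is_linear => a [x u] [x' u'] /=; rewrite /ext_bracket /=.
    apply: injective_projections => /=; first exact: d1.
    rewrite (t1 y) (l1 w) (r1 y) !scalerDr.
    by rewrite !addrA [LHS](ACl (1*3*5*2*4*6)%AC).
  + move=> [x u]; rewrite /is_linear => a [y w] [y' w'] /=; rewrite /ext_bracket /=.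
    apply: injective_projections => /=; first exact: d2.
    rewrite (t2 x) (l2 x) (r2 u) !scalerDr.
    by rewrite !addrA [LHS](ACl (1*3*5*2*4*6)%AC).
- by rewrite /is_linear => a [x u] [x' u']; rewrite /sum_map /=; rewrite la lav.
- by rewrite /is_linear => a [x u] [x' u']; rewrite /sum_map /=; rewrite lb lbv.
- by move=> [x u]; rewrite /sum_map /= cab cabv.
split.
- move=> [x u] [y v]; rewrite /ext_bracket /sum_map /=.
  apply: injective_projections => /=; first exact: dsk.
  rewrite tsk !rsk !opprD opprK.
  by rewrite addrAC.
move=> [x u] [y v] [z w]; rewrite /ext_bracket /sum_map /=.
apply: injective_projections => /=; first exact: djac.
rewrite !(linD _ _ _ (l2 _)).
apply: jac_comb; rewrite ?rjac //.
have := tcoc x y z.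
rewrite (dsk x z) (tsk x z) !(linN _ _ (t2 _)) !(linN _ _ (l2 _)) !opprK.
done.
Qed.

Lemma ext_is_ext (K : fieldType) (L V : lmodType K)
  (delta : L -> L -> L) (alpha beta : L -> L)
  (alphaV betaV : V -> V)
  (ll : L -> V -> V) (lr : V -> L -> V)
  (theta : L -> L -> V) :
  bihom_lie delta alpha beta ->
  abelian_bihom_lie alphaV betaV ->
  bihom_rep delta alpha beta alphaV betaV ll lr ->
  two_cocycle delta alpha beta ll theta ->
  bihom_extension (fun _ _ => 0) alphaV betaV (ext_bracket delta theta ll lr)
    (sum_map alpha alphaV) (sum_map beta betaV) delta alpha beta
    (@i0 K L V) (@pi0 K L V).
Proof.
move=> HL HV HR HT.
have HM := @ext_lie K L V delta alpha beta alphaV betaV ll lr theta HL HV HR HT.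
have HL' := HL.
case: HL' => [[d1 d2] la lb _ _]; case: HR => [[l1 l2] [r1 r2] _ _].
case: HT => [[t1 t2] _ _].
split; split => //.
- split.
  + rewrite /is_linear => a u u'; rewrite /i0 /=.
    by apply: injective_projections => //=; rewrite scaler0 addr0.
  + by move=> v; rewrite /i0 /sum_map /= (lin0 _ la).
  + by move=> v; rewrite /i0 /sum_map /= (lin0 _ lb).
  + move=> v w; rewrite /i0 /ext_bracket /=.
    by rewrite (lin0 _ (d1 0)) (lin0 _ (t1 0)) (lin0 _ (l1 w)) (lin0 _ (r2 v)) !addr0.
- by move=> u v [].
- by move=> l; exists (l, 0).
- move=> [x u]; rewrite /pi0 /i0 /=; split.
  + by move=> ->; exists u.
  + by move=> [v [-> _]].
Qed.

Theorem mainTheorem4 (K : fieldType) (L V : lmodType K)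
  (delta : L -> L -> L) (alpha beta : L -> L)
  (alphaV betaV : V -> V)
  (ll : L -> V -> V) (lr : V -> L -> V)
  (theta theta' : L -> L -> V) :
  bihom_lie delta alpha beta ->
  abelian_bihom_lie alphaV betaV ->
  bihom_rep delta alpha beta alphaV betaV ll lr ->
  two_cocycle delta alpha beta ll theta ->
  two_cocycle delta alpha beta ll theta' ->
  (exists h : L -> V, C1 alpha beta alphaV betaV h /\
     forall x y, theta' x y - theta x y = D1 delta ll lr h x y) ->
  let d := ext_bracket delta theta ll lr in
  let d' := ext_bracket delta theta' ll lr in
  let aM := sum_map alpha alphaV in
  let bM := sum_map beta betaV in
  [/\ bihom_extension (fun _ _ => 0) alphaV betaV d aM bM delta alpha beta
        (@i0 K L V) (@pi0 K L V),
      bihom_extension (fun _ _ => 0) alphaV betaV d' aM bM delta alpha beta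
        (@i0 K L V) (@pi0 K L V) &
      equivalent_extensions d aM bM (@i0 K L V) (@pi0 K L V)
                            d' aM bM (@i0 K L V) (@pi0 K L V)].
Proof.
move=> HL HV HR HT HT' [h [[hl ha hb] hD]] d d' aM bM.
split.
- exact: (@ext_is_ext K L V delta alpha beta alphaV betaV ll lr theta).
- exact: (@ext_is_ext K L V delta alpha beta alphaV betaV ll lr theta').
have HM := @ext_lie K L V delta alpha beta alphaV betaV ll lr theta HL HV HR HT.
have HM' := @ext_lie K L V delta alpha beta alphaV betaV ll lr theta' HL HV HR HT'.
case: HR => [[l1 l2] [r1 r2] _ _].
case: HV => [_ lav lbv _ _].
exists id, id, (fun p => (p.1, p.2 - h p.1)).
split => //.
- split => //.
  split.
  + rewrite /is_linear => a [x u] [x' u'] /=.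
    apply: injective_projections => //=.
    rewrite (linD _ _ _ hl) (linZ _ _ _ hl) scalerBr.
    by rewrite opprD !addrA [LHS](ACl (1*3*2*4)%AC).
  + by move=> [x u]; rewrite /aM /sum_map /= (linB _ _ _ lav) ha.
  + by move=> [x u]; rewrite /bM /sum_map /= (linB _ _ _ lbv) hb.
  + move=> [x u] [y w]; rewrite /d /d' /ext_bracket /=.
    apply: injective_projections => //=.
    rewrite (linB _ _ _ (l2 x)) (linB _ _ _ (r1 y)).
    have -> : theta' x y = D1 delta ll lr h x y + theta x y by rewrite -hD subrK.
    by rewrite /D1 !addrA [RHS](ACl (4*5*7*1*2*6*3*8)%AC) /= !addrK.
  + exists (fun p => (p.1, p.2 + h p.1)).
    * by move=> [x u] /=; rewrite subrK.
    * by move=> [x u] /=; rewrite addrK.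
- by move=> v; rewrite /i0 /= (lin0 _ hl) subr0.
Qed.
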